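(* Let $\varphi_{tm}$ be the morphism on finite sequences of numbers in $[0,1]$ defined by $\varphi_{tm}(x)=\left(\tfrac{x}{2}+\tfrac14,\ \tfrac{x}{2}+\tfrac34\right)$ if $0\le x\le \tfrac12$ and $\varphi_{tm}(x)=\left(\tfrac{x}{2}+\tfrac14,\ \tfrac{x}{2}-\tfrac14\right)$ if $\tfrac12<x\le 1$, extended by concatenation. Let $a_{tm}=\tfrac12,1,\tfrac34,\tfrac14,\tfrac58,\tfrac18,\tfrac38,\tfrac78,\ldots$ be its fixed point starting with $\tfrac12$. Then $a_{tm}$ is a canonical sequence and it is a representative of the valid permutation $\alpha_{u_{tm}}$ of the Thue–Morse word $u_{tm}=0110100110010110\cdots$ (the fixed point starting with $0$ of $0\mapsto 01,\ 1\mapsto 10$). In particular, the Thue–Morse permutation is ergodic and $a_{tm}$ is its canonical representative.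
   Context: For an aperiodic infinite word $u$ over $\{0,\ldots,q-1\}$, $\alpha_u$ is the infinite permutation with $\alpha_u[i]<\alpha_u[j]$ iff the shift $T^iu=u[i]u[i+1]\cdots$ is lexicographically smaller than $T^ju$. An infinite permutation is an equivalence class of real sequences with pairwise distinct elements, two sequences $(a[n]),(b[n])$ being equivalent iff $a[i]<a[j]\Leftrightarrow b[i]<b[j]$ for all $i,j$. A real sequence $(a[i])_{i\ge0}$ is canonical if its elements are pairwise distinct, lie in $[0,1]$, and for every $t\in[0,1]$, $\#\{0\le k<n: a[j+k]<t\}/n\to t$ as $n\to\infty$ uniformly in $j$; a permutation is ergodic if it has a canonical representative. *)

(* Defs.v *)
From Stdlib Require Import Reals Lra Lia List Arith.
Import ListNotations.
Open Scope R_scope.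

Definition word := nat -> nat.

Definition shift (i : nat) (u : word) : word := fun n => u (i + n)%nat.

Definition lex_lt (u v : word) : Prop :=
  exists k : nat, (forall m : nat, (m < k)%nat -> u m = v m) /\ (u k < v k)%nat.

Definition represents_alpha (a : nat -> R) (u : word) : Prop :=
  (forall i j : nat, i <> j -> a i <> a j) /\
  (forall i j : nat, a i < a j <-> lex_lt (shift i u) (shift j u)).

Fixpoint count_below (a : nat -> R) (t : R) (j n : nat) : nat :=
  match n with
  | O => O
  | S m => (count_below a t j m + (if Rlt_dec (a (j + m)%nat) t then 1 else 0))%nat
  end.

Definition canonical (a : nat -> R) : Prop :=
  (forall i j : nat, i <> j -> a i <> a j) /\
  (forall i : nat, 0 <= a i <= 1) /\
  (forall t : R, 0 <= t <= 1 ->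
     forall eps : R, eps > 0 -> exists N : nat, forall n j : nat, (N <= n)%nat ->
        Rabs (INR (count_below a t j n) / INR n - t) < eps).

Definition alpha_ergodic (u : word) : Prop :=
  exists a : nat -> R, canonical a /\ represents_alpha a u.

(** Thue-Morse morphism 0 -> 01, 1 -> 10, and its fixed point starting with 0:
    u[0] = 0, and for n > 0, u[n] is letter (n mod 2) of the image of u[n/2]. *)
Definition tm_morph (x : nat) : list nat := [x; (1 - x)%nat].

Fixpoint tm_aux (fuel n : nat) : nat :=
  match fuel with
  | O => O
  | S f => match n with
           | O => O
           | _ => nth (n mod 2) (tm_morph (tm_aux f (Nat.div2 n))) O
           end
  end.

Definition u_tm : word := fun n => tm_aux n n.

Definition phi_tm (x : R) : list R :=
  if Rle_dec x (1/2) then [x/2 + 1/4; x/2 + 3/4] else [x/2 + 1/4; x/2 - 1/4].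

(** Its fixed point starting with 1/2: a[0] = 1/2, and for n > 0, a[n] is
    entry (n mod 2) of phi_tm (a[n/2]). *)
Fixpoint atm_aux (fuel n : nat) : R :=
  match fuel with
  | O => 1/2
  | S f => match n with
           | O => 1/2
           | _ => nth (n mod 2) (phi_tm (atm_aux f (Nat.div2 n))) 0
           end
  end.

Definition a_tm : nat -> R := fun n => atm_aux n n.

(* Main.v *)
Require Import Defs.
From Stdlib Require Import Reals Lra Lia List Arith ZArith Classical.
Require Import Defs.
Import ListNotations.
Open Scope R_scope.


Lemma tm_aux_S : forall g n, tm_aux (S g) (S n) = nth (S n mod 2) (tm_morph (tm_aux g (Nat.div2 (S n)))) O.
Proof. reflexivity. Qed.
Lemma atm_aux_S : forall g n, atm_aux (S g) (S n) = nth (S n mod 2) (phi_tm (atm_aux g (Nat.div2 (S n)))) 0.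
Proof. reflexivity. Qed.

Lemma tm_aux_fuel : forall f1 f2 n, (n <= f1)%nat -> (n <= f2)%nat -> tm_aux f1 n = tm_aux f2 n.
Proof.
  induction f1 as [|g1 IH]; intros f2 n H1 H2.
  - assert (n = 0%nat) by lia; subst. destruct f2; reflexivity.
  - destruct n as [|n']. { destruct f2; reflexivity. }
    destruct f2 as [|g2]; [lia|]. rewrite tm_aux_S, tm_aux_S.
    rewrite (IH g2 (Nat.div2 (S n'))); [reflexivity| |].
    + pose proof (Nat.le_div2 n'). lia.
    + pose proof (Nat.le_div2 n'). lia.
Qed.

Lemma atm_aux_fuel : forall f1 f2 n, (n <= f1)%nat -> (n <= f2)%nat -> atm_aux f1 n = atm_aux f2 n.
Proof.
  induction f1 as [|g1 IH]; intros f2 n H1 H2.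
  - assert (n = 0%nat) by lia; subst. destruct f2; reflexivity.
  - destruct n as [|n']. { destruct f2; reflexivity. }
    destruct f2 as [|g2]; [lia|]. rewrite atm_aux_S, atm_aux_S.
    rewrite (IH g2 (Nat.div2 (S n'))); [reflexivity| |].
    + pose proof (Nat.le_div2 n'). lia.
    + pose proof (Nat.le_div2 n'). lia.
Qed.

Lemma u_even : forall m, u_tm (2*m)%nat = u_tm m.
Proof.
  intros m. destruct m as [|m']; [reflexivity|].
  unfold u_tm. remember (2 * S m')%nat as n.
  destruct n as [|n']; [lia|]. rewrite tm_aux_S.
  rewrite Heqn.
  replace (Nat.div2 (2 * S m')) with (S m') by (symmetry; apply Nat.div2_double).
  replace ((2 * S m') mod 2)%nat with 0%nat by (symmetry; rewrite Nat.mul_comm; apply Nat.Div0.mod_mul).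
  cbn [nth tm_morph]. apply tm_aux_fuel; lia.
Qed.

Lemma u_odd : forall m, u_tm (2*m+1)%nat = (1 - u_tm m)%nat.
Proof.
  intros m. unfold u_tm. replace (2*m+1)%nat with (S (2*m)) by lia. rewrite tm_aux_S.
  replace (Nat.div2 (S (2 * m))) with m by (symmetry; apply Nat.div2_succ_double).
  replace ((S (2 * m)) mod 2)%nat with 1%nat.
  2:{ replace (S (2*m)) with (1 + m*2)%nat by lia. rewrite Nat.Div0.mod_add. reflexivity. }
  cbn [nth tm_morph]. f_equal. apply tm_aux_fuel; lia.
Qed.

Lemma u_le1 : forall n, (u_tm n <= 1)%nat.
Proof.
  intros n. induction n as [n IH] using lt_wf_ind.
  destruct (Nat.Even_or_Odd n) as [[m Hm]|[m Hm]]; subst.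
  - destruct m. { unfold u_tm; simpl. lia. } rewrite u_even. apply IH. lia.
  - rewrite u_odd. lia.
Qed.

Lemma a_even : forall m, a_tm (2*m)%nat = a_tm m / 2 + 1/4.
Proof.
  intros m. destruct m as [|m'].
  { unfold a_tm. simpl. lra. }
  unfold a_tm. remember (2 * S m')%nat as n.
  destruct n as [|n']; [lia|]. rewrite atm_aux_S.
  rewrite Heqn.
  replace (Nat.div2 (2 * S m')) with (S m') by (symmetry; apply Nat.div2_double).
  replace ((2 * S m') mod 2)%nat with 0%nat by (symmetry; rewrite Nat.mul_comm; apply Nat.Div0.mod_mul).
  rewrite (atm_aux_fuel n' (S m') (S m')) by lia.
  unfold phi_tm. destruct (Rle_dec _ _); simpl; reflexivity.
Qed.

Lemma a_odd : forall m, a_tm (2*m+1)%nat =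
  if Rle_dec (a_tm m) (1/2) then a_tm m / 2 + 3/4 else a_tm m / 2 - 1/4.
Proof.
  intros m. unfold a_tm. replace (2*m+1)%nat with (S (2*m)) by lia. rewrite atm_aux_S.
  replace (Nat.div2 (S (2 * m))) with m by (symmetry; apply Nat.div2_succ_double).
  replace ((S (2 * m)) mod 2)%nat with 1%nat.
  2:{ replace (S (2*m)) with (1 + m*2)%nat by lia. rewrite Nat.Div0.mod_add. reflexivity. }
  rewrite (atm_aux_fuel (2*m) m m) by lia.
  unfold phi_tm. destruct (Rle_dec _ _); simpl; reflexivity.
Qed.

Lemma a_bounds : forall n, 0 < a_tm n <= 1.
Proof.
  intros n. induction n as [n IH] using lt_wf_ind.
  destruct (Nat.Even_or_Odd n) as [[m Hm]|[m Hm]]; subst.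
  - destruct m. { unfold a_tm; simpl. lra. } rewrite a_even.
    specialize (IH (S m) ltac:(lia)). lra.
  - rewrite a_odd. specialize (IH m ltac:(lia)). destruct (Rle_dec _ _); lra.
Qed.

Lemma u_a : forall n, u_tm n = 0%nat <-> a_tm n <= 1/2.
Proof.
  intros n. induction n as [n IH] using lt_wf_ind.
  destruct (Nat.Even_or_Odd n) as [[m Hm]|[m Hm]]; subst.
  - destruct m. { unfold u_tm, a_tm; simpl. split; intros; [lra|reflexivity]. }
    rewrite u_even, a_even. specialize (IH (S m) ltac:(lia)).
    pose proof (a_bounds (S m)). split; intro Hx.
    + apply IH in Hx. lra.
    + apply IH. lra.
  - rewrite u_odd, a_odd. specialize (IH m ltac:(lia)). pose proof (u_le1 m).
    pose proof (a_bounds m).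
    destruct (Rle_dec _ _) as [r|r]; split; intro Hy.
    + apply IH in r. lia.
    + lra.
    + lra.
    + assert (u_tm m <> 0%nat) by (intro Hc; apply IH in Hc; lra). lia.
Qed.


Lemma u_pair : forall m, u_tm (2*m+1)%nat = (1 - u_tm (2*m)%nat)%nat.
Proof. intros. rewrite u_odd, u_even. reflexivity. Qed.

Lemma u_pair' : forall x y, (x = 2*y)%nat -> u_tm (S x) = (1 - u_tm x)%nat.
Proof. intros. subst. replace (S (2*y)) with (2*y+1)%nat by lia. apply u_pair. Qed.

Lemma mixed : forall k i j,
  (forall m, (m < k)%nat -> u_tm (2*i+m)%nat = u_tm (2*j+1+m)%nat) ->
  u_tm (2*i+k)%nat <> u_tm (2*j+1+k)%nat ->
  ((u_tm (2*i+k)%nat < u_tm (2*j+1+k)%nat)%nat <-> u_tm (2*j+1)%nat = 1%nat).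
Proof.
  intros k. induction k as [k IH] using lt_wf_ind. intros i j Hp Hn.
  pose proof (u_le1 (2*i+k)). pose proof (u_le1 (2*j+1+k)). pose proof (u_le1 (2*j+1)).
  destruct k as [|[|k]].
  - replace (2*i+0)%nat with (2*i)%nat in * by lia.
    replace (2*j+1+0)%nat with (2*j+1)%nat in * by lia. lia.
  - pose proof (Hp 0%nat ltac:(lia)) as Q0.
    replace (2*i+0)%nat with (2*i)%nat in * by lia.
    replace (2*j+1+0)%nat with (2*j+1)%nat in * by lia.
    replace (2*i+1)%nat with (S (2*i)) in * by lia.
    rewrite (u_pair' (2*i) i) in * by lia.
    replace (2*j+1+1)%nat with (S (2*j+1)) in * by lia.
    pose proof (u_le1 (2*i)). pose proof (u_le1 (S (2*j+1))). lia.
  - pose proof (Hp 0%nat ltac:(lia)) as Q0. pose proof (Hp 1%nat ltac:(lia)) as Q1.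
    replace (2*i+0)%nat with (2*i)%nat in * by lia.
    replace (2*j+1+0)%nat with (2*j+1)%nat in * by lia.
    replace (2*i+1)%nat with (S (2*i)) in Q1 by lia.
    rewrite (u_pair' (2*i) i) in Q1 by lia.
    assert (E3 : u_tm (2*(j+1)+1)%nat = u_tm (2*j+1)%nat).
    { rewrite u_pair. replace (2*(j+1))%nat with (2*j+1+1)%nat by lia.
      pose proof (u_le1 (2*i)). lia. }
    specialize (IH k ltac:(lia) (i+1)%nat (j+1)%nat).
    replace (2*(i+1)+k)%nat with (2*i+S (S k))%nat in IH by lia.
    replace (2*(j+1)+1+k)%nat with (2*j+1+S (S k))%nat in IH by lia.
    rewrite E3 in IH. apply IH; [|assumption].
    intros m Hm. replace (2*(i+1)+m)%nat with (2*i+(m+2))%nat by lia.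
    replace (2*(j+1)+1+m)%nat with (2*j+1+(m+2))%nat by lia. apply Hp. lia.
Qed.

Lemma lex_irrefl : forall w, ~ lex_lt w w.
Proof. intros w [k [_ H]]. lia. Qed.

Lemma lex_asym : forall v w, lex_lt v w -> ~ lex_lt w v.
Proof.
  intros v w [k [Hk Hlt]] [l [Hl Hlt']].
  destruct (Nat.lt_trichotomy k l) as [c|[c|c]].
  - rewrite (Hl k c) in Hlt. lia.
  - subst. lia.
  - rewrite (Hk l c) in Hlt'. lia.
Qed.

Lemma lex_even : forall i j, lex_lt (shift (2*i) u_tm) (shift (2*j) u_tm) -> lex_lt (shift i u_tm) (shift j u_tm).
Proof.
  intros i j [k [Hk Hlt]]. unfold shift in *.
  destruct (Nat.Even_or_Odd k) as [[k' Ek]|[k' Ek]]; subst.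
  - exists k'. split.
    + intros m Hm. specialize (Hk (2*m)%nat ltac:(lia)).
      replace (2*i+2*m)%nat with (2*(i+m))%nat in Hk by lia.
      replace (2*j+2*m)%nat with (2*(j+m))%nat in Hk by lia.
      rewrite !u_even in Hk. exact Hk.
    + replace (2*i+2*k')%nat with (2*(i+k'))%nat in Hlt by lia.
      replace (2*j+2*k')%nat with (2*(j+k'))%nat in Hlt by lia.
      rewrite !u_even in Hlt. exact Hlt.
  - exfalso. specialize (Hk (2*k')%nat ltac:(lia)).
    replace (2*i+2*k')%nat with (2*(i+k'))%nat in Hk by lia.
    replace (2*j+2*k')%nat with (2*(j+k'))%nat in Hk by lia.
    replace (2*i+(2*k'+1))%nat with (2*(i+k')+1)%nat in Hlt by lia.
    replace (2*j+(2*k'+1))%nat with (2*(j+k')+1)%nat in Hlt by lia.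
    rewrite !u_even in Hk. rewrite !u_odd in Hlt. lia.
Qed.

Lemma lex_cons : forall i j, u_tm i = u_tm j -> lex_lt (shift (i+1) u_tm) (shift (j+1) u_tm) ->
  lex_lt (shift i u_tm) (shift j u_tm).
Proof.
  intros i j E [k [Hk Hlt]]. unfold shift in *. exists (S k). split.
  - intros m Hm. destruct m. { rewrite !Nat.add_0_r. exact E. }
    specialize (Hk m ltac:(lia)). replace (i + S m)%nat with (i+1+m)%nat by lia.
    replace (j + S m)%nat with (j+1+m)%nat by lia. exact Hk.
  - replace (i + S k)%nat with (i+1+k)%nat by lia.
    replace (j + S k)%nat with (j+1+k)%nat by lia. exact Hlt.
Qed.

Lemma lex_odd : forall i j, lex_lt (shift (2*i+1) u_tm) (shift (2*j+1) u_tm) ->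
  (u_tm i = 1%nat /\ u_tm j = 0%nat) \/ (u_tm i = u_tm j /\ lex_lt (shift i u_tm) (shift j u_tm)).
Proof.
  intros i j [k [Hk Hlt]]. unfold shift in *.
  pose proof (u_le1 i). pose proof (u_le1 j).
  destruct k as [|k].
  - left. rewrite !Nat.add_0_r, !u_odd in Hlt. lia.
  - right. assert (E : u_tm i = u_tm j).
    { specialize (Hk 0%nat ltac:(lia)). rewrite !Nat.add_0_r, !u_odd in Hk. lia. }
    split; [exact E|]. apply lex_cons; [exact E|]. apply lex_even.
    exists k. unfold shift. split.
    + intros m Hm. specialize (Hk (S m) ltac:(lia)).
      replace (2*(i+1)+m)%nat with (2*i+1+S m)%nat by lia.
      replace (2*(j+1)+m)%nat with (2*j+1+S m)%nat by lia. exact Hk.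
    + replace (2*(i+1)+k)%nat with (2*i+1+S k)%nat by lia.
      replace (2*(j+1)+k)%nat with (2*j+1+S k)%nat by lia. exact Hlt.
Qed.

Lemma lex_eo : forall i j, lex_lt (shift (2*i) u_tm) (shift (2*j+1) u_tm) -> u_tm (2*j+1)%nat = 1%nat.
Proof.
  intros i j [k [Hk Hlt]]. unfold shift in *.
  apply (proj1 (mixed k i j Hk ltac:(lia))). exact Hlt.
Qed.

Lemma lex_oe : forall i j, lex_lt (shift (2*i+1) u_tm) (shift (2*j) u_tm) -> u_tm (2*i+1)%nat = 0%nat.
Proof.
  intros i j [k [Hk Hlt]]. unfold shift in *.
  pose proof (mixed k j i (fun m Hm => eq_sym (Hk m Hm)) ltac:(lia)).
  pose proof (u_le1 (2*i+1)).
  assert (u_tm (2*i+1)%nat <> 1%nat) by (intro E; apply H in E; lia). lia.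
Qed.

Lemma lex_a : forall i j, lex_lt (shift i u_tm) (shift j u_tm) -> a_tm i < a_tm j.
Proof.
  intros i. remember (i) as i0. intros j. revert i j Heqi0.
  enough (G : forall s i j, (i + j)%nat = s -> lex_lt (shift i u_tm) (shift j u_tm) -> a_tm i < a_tm j)
    by (intros; subst; eapply G; eauto).
  intros s. induction s as [s IH] using lt_wf_ind. intros i j Es Hl.
  destruct (Nat.Even_or_Odd i) as [[i' Ei]|[i' Ei]]; destruct (Nat.Even_or_Odd j) as [[j' Ej]|[j' Ej]]; subst.
  - rewrite !a_even. apply lex_even in Hl.
    destruct (Nat.eq_dec (i'+j') 0) as [Z|Z].
    { assert (i' = 0%nat) by lia. assert (j' = 0%nat) by lia. subst. exfalso. exact (lex_irrefl _ Hl). }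
    specialize (IH (i'+j')%nat ltac:(lia) i' j' eq_refl Hl). lra.
  - apply lex_eo in Hl. rewrite u_odd in Hl. pose proof (u_le1 j').
    assert (u_tm j' = 0%nat) by lia. apply u_a in H0.
    rewrite a_even, a_odd. pose proof (a_bounds i'). pose proof (a_bounds j').
    destruct (Rle_dec _ _); lra.
  - apply lex_oe in Hl. rewrite u_odd in Hl. pose proof (u_le1 i').
    assert (~ a_tm i' <= 1/2) by (intro Hc; apply u_a in Hc; lia).
    rewrite a_even, a_odd. pose proof (a_bounds i'). pose proof (a_bounds j').
    destruct (Rle_dec _ _); lra.
  - rewrite !a_odd. pose proof (a_bounds i'). pose proof (a_bounds j').
    apply lex_odd in Hl. destruct Hl as [[H1 H2]|[E Hl]].
    + apply u_a in H2. assert (~ a_tm i' <= 1/2) by (intro Hc; apply u_a in Hc; lia).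
      destruct (Rle_dec (a_tm i') _); destruct (Rle_dec (a_tm j') _); lra.
    + specialize (IH (i'+j')%nat ltac:(lia) i' j' eq_refl Hl).
      destruct (Rle_dec (a_tm i') _) as [r1|r1]; destruct (Rle_dec (a_tm j') _) as [r2|r2]; try lra;
      exfalso; first [apply u_a in r1; rewrite E in r1; apply u_a in r1; lra|apply u_a in r2; rewrite <- E in r2; apply u_a in r2; lra].
Qed.

Lemma noper : forall p, (p > 0)%nat -> forall i, ~ (forall n, (i <= n)%nat -> u_tm (n+p)%nat = u_tm n).
Proof.
  intros p. induction p as [p IH] using lt_wf_ind. intros Hp i Hper.
  destruct (Nat.Even_or_Odd p) as [[q Eq]|[q Eq]]; subst.
  - apply (IH q ltac:(lia) ltac:(lia) i). intros m Hm.
    rewrite <- (u_even (m+q)), <- (u_even m).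
    replace (2*(m+q))%nat with (2*m+2*q)%nat by lia. apply Hper. lia.
  - assert (Alt : forall n, (i <= n)%nat -> u_tm (S n) = (1 - u_tm n)%nat).
    { intros n Hn. destruct (Nat.Even_or_Odd n) as [[y Ey]|[y Ey]].
      - apply (u_pair' n y Ey).
      - rewrite <- (Hper n Hn), <- (Hper (S n) ltac:(lia)).
        replace (S n + (2*q+1))%nat with (S (n + (2*q+1))) by lia.
        apply (u_pair' _ (y+q+1)). lia. }
    pose proof (Alt (2*i)%nat ltac:(lia)) as A1.
    pose proof (Alt (S (2*i))%nat ltac:(lia)) as A2.
    pose proof (Alt i ltac:(lia)) as A3.
    replace (S (S (2*i))) with (2*(i+1))%nat in A2 by lia. rewrite u_even in A2.
    replace (S (2*i)) with (2*i+1)%nat in A1, A2 by lia. rewrite u_even, u_odd in A1.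
    rewrite u_odd in A2. replace (i+1)%nat with (S i) in A2 by lia.
    pose proof (u_le1 i). lia.
Qed.

Lemma ex_min : forall (P : nat -> Prop) n, P n -> exists k, P k /\ forall m, (m < k)%nat -> ~ P m.
Proof.
  intros P n. induction n as [n IH] using lt_wf_ind. intros Hn.
  destruct (classic (exists m, (m < n)%nat /\ P m)) as [[m [Hm Pm]]|N].
  - exact (IH m Hm Pm).
  - exists n. split; [exact Hn|]. intros m Hm Pm. apply N. eauto.
Qed.

Lemma lex_total : forall i j, i <> j -> lex_lt (shift i u_tm) (shift j u_tm) \/ lex_lt (shift j u_tm) (shift i u_tm).
Proof.
  assert (G : forall i j, (i < j)%nat -> lex_lt (shift i u_tm) (shift j u_tm) \/ lex_lt (shift j u_tm) (shift i u_tm)).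
  { intros i j Hij.
    assert (Ex : exists k, u_tm (i+k)%nat <> u_tm (j+k)%nat).
    { apply NNPP. intro N. apply (noper (j-i) ltac:(lia) i). intros n Hn.
      destruct (classic (u_tm (n + (j-i))%nat = u_tm n)) as [e|e]; [exact e|].
      exfalso. apply N. exists (n-i)%nat. replace (i + (n-i))%nat with n by lia.
      replace (j + (n-i))%nat with (n + (j-i))%nat by lia. auto. }
    destruct Ex as [k0 Hk0].
    destruct (ex_min (fun k => u_tm (i+k)%nat <> u_tm (j+k)%nat) k0 Hk0) as [k [Hk Hmin]].
    assert (Pre : forall m, (m < k)%nat -> u_tm (i+m)%nat = u_tm (j+m)%nat).
    { intros m Hm. apply NNPP. apply Hmin. exact Hm. }
    destruct (Nat.lt_gt_cases (u_tm (i+k)%nat) (u_tm (j+k)%nat)) as [[c|c] _].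
    - exact Hk.
    - left. exists k. unfold shift. auto.
    - right. exists k. unfold shift. split; [intros m Hm; symmetry; auto|exact c]. }
  intros i j Hij. destruct (Nat.lt_gt_cases i j) as [[c|c] _]; [exact Hij| |].
  - apply G; exact c.
  - destruct (G j i c); auto.
Qed.

Theorem repr : represents_alpha a_tm u_tm.
Proof.
  split.
  - intros i j Hij E. destruct (lex_total i j Hij) as [L|L]; apply lex_a in L; lra.
  - intros i j. split.
    + intros Hlt. destruct (Nat.eq_dec i j) as [e|n]; [subst; lra|].
      destruct (lex_total i j n) as [L|L]; [exact L|]. apply lex_a in L. lra.
    + apply lex_a.
Qed.


Fixpoint sumn (g : nat -> nat) (j n : nat) : nat :=
  match n with O => O | S m => (sumn g j m + g (j+m)%nat)%nat end.

Lemma sumn_ext : forall g h j n, (forall k, (k < n)%nat -> g (j+k)%nat = h (j+k)%nat) -> sumn g j n = sumn h j n.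
Proof. intros g h j n. induction n; intros H; simpl; [reflexivity|]. rewrite IHn by (intros; apply H; lia). rewrite H by lia. reflexivity. Qed.

Lemma sumn_add : forall g h j n, sumn (fun i => g i + h i)%nat j n = (sumn g j n + sumn h j n)%nat.
Proof. intros g h j n. induction n; simpl; [reflexivity|]. rewrite IHn. lia. Qed.

Lemma sumn_double : forall g j n, sumn g (2*j) (2*n) = sumn (fun i => g (2*i)%nat + g (2*i+1)%nat)%nat j n.
Proof.
  intros g j n. induction n; [reflexivity|].
  replace (2 * S n)%nat with (S (S (2*n))) by lia. cbn [sumn]. rewrite <- IHn.
  replace (2*j + S (2*n))%nat with (2*(j+n)+1)%nat by lia.
  replace (2*j + 2*n)%nat with (2*(j+n))%nat by lia. lia.
Qed.

Lemma sumn_le : forall g h j n, (forall k, (k < n)%nat -> (g (j+k)%nat <= h (j+k)%nat)%nat) -> (sumn g j n <= sumn h j n)%nat.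
Proof. intros g h j n. induction n; intros H; simpl; [lia|]. pose proof (H n ltac:(lia)). pose proof (IHn ltac:(intros k Hk; apply H; lia)). lia. Qed.

Lemma sumn_bound : forall g j n, (forall i, (g i <= 1)%nat) -> (sumn g j n <= n)%nat.
Proof. intros g j n H. induction n; simpl; [lia|]. specialize (H (j+n)%nat). lia. Qed.

Lemma sumn_split : forall g j n1 n2, sumn g j (n1+n2) = (sumn g j n1 + sumn g (j+n1) n2)%nat.
Proof. intros g j n1 n2. induction n2; simpl. { rewrite Nat.add_0_r. lia. }
  replace (n1 + S n2)%nat with (S (n1+n2)) by lia. simpl. rewrite IHn2.
  replace (j + (n1+n2))%nat with (j+n1+n2)%nat by lia. lia. Qed.

Lemma sumn_const : forall c j n, sumn (fun _ => c) j n = (c * n)%nat.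
Proof. intros c j n. induction n; cbn [sumn]; [lia|]. rewrite IHn. lia. Qed.

Definition ile (c:R) (i:nat) : nat := if Rle_dec (a_tm i) c then 1%nat else 0%nat.
Definition ilt (c:R) (i:nat) : nat := if Rlt_dec (a_tm i) c then 1%nat else 0%nat.
Definition G (L m : nat) (c : R) := sumn (ile c) (2^L * m) (2^L).

Lemma count_sumn : forall t j n, count_below a_tm t j n = sumn (ilt t) j n.
Proof. intros t j n. induction n; simpl; [reflexivity|]. rewrite IHn. reflexivity. Qed.

Lemma G_zero : forall L m c, c <= 0 -> G L m c = 0%nat.
Proof.
  intros L m c Hc. unfold G. transitivity (sumn (fun _ => 0%nat) (2^L*m) (2^L)).
  - apply sumn_ext. intros k _. unfold ile. pose proof (a_bounds (2^L*m+k)). destruct (Rle_dec _ _); [lra|reflexivity].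
  - rewrite sumn_const. lia.
Qed.

Lemma G_full : forall L m c, 1 <= c -> G L m c = (2^L)%nat.
Proof.
  intros L m c Hc. unfold G. transitivity (sumn (fun _ => 1%nat) (2^L*m) (2^L)).
  - apply sumn_ext. intros k _. unfold ile. pose proof (a_bounds (2^L*m+k)). destruct (Rle_dec _ _); [reflexivity|lra].
  - rewrite sumn_const. lia.
Qed.

Lemma ile_even : forall c n, ile c (2*n)%nat = ile (2*c - 1/2) n.
Proof. intros. unfold ile. rewrite a_even. destruct (Rle_dec _ _); destruct (Rle_dec _ _); try reflexivity; lra. Qed.

Lemma ile_odd : forall c n, 0 <= c <= 1 ->
  (ile c (2*n+1)%nat + ile (1/2) n = ile (2*c-3/2) n + ile (2*c+1/2) n)%nat.
Proof.
  intros c n Hc. unfold ile. rewrite a_odd. pose proof (a_bounds n).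
  destruct (Rle_dec (a_tm n) (1/2)) as [r|r];
  repeat (destruct (Rle_dec _ _)); try reflexivity; lra.
Qed.

Lemma G_step : forall L m c, 0 <= c <= 1 ->
  (G (S L) m c + G L m (1/2) = G L m (2*c-1/2) + G L m (2*c-3/2) + G L m (2*c+1/2))%nat.
Proof.
  intros L m c Hc. unfold G. rewrite Nat.pow_succ_r'.
  replace (2 * 2^L * m)%nat with (2 * (2^L*m))%nat by lia.
  rewrite sumn_double, <- sumn_add, <- !sumn_add. apply sumn_ext. intros k _.
  rewrite ile_even. pose proof (ile_odd c (2^L*m+k) Hc). lia.
Qed.

Lemma ge1_div : forall x D, 0 < D -> D <= x -> 1 <= x / D.
Proof. intros x D H1 H2. unfold Rdiv. apply (Rmult_le_reg_r D); [lra|]. rewrite Rmult_assoc, Rinv_l by lra. lra. Qed.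
Lemma le1_div : forall x D, 0 < D -> x <= D -> x / D <= 1.
Proof. intros x D H1 H2. unfold Rdiv. apply (Rmult_le_reg_r D); [lra|]. rewrite Rmult_assoc, Rinv_l by lra. lra. Qed.
Lemma ge0_div : forall x D, 0 < D -> 0 <= x -> 0 <= x / D.
Proof. intros x D H1 H2. unfold Rdiv. apply Rmult_le_pos; [lra|]. left. apply Rinv_0_lt_compat. lra. Qed.
Lemma le0_div : forall x D, 0 < D -> x <= 0 -> x / D <= 0.
Proof. intros x D H1 H2. unfold Rdiv. pose proof (Rinv_0_lt_compat D H1). nra. Qed.

Definition isint (x:R) := exists z : Z, x = IZR z.

Definition clamp (x D : R) := if Rle_dec x 0 then 0 else if Rle_dec D x then D else x.

Lemma isint_nat : forall n, isint (INR n).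
Proof. intros n. exists (Z.of_nat n). apply INR_IZR_INZ. Qed.
Lemma isint_add : forall x y, isint x -> isint y -> isint (x+y).
Proof. intros x y [a ->] [b ->]. exists (a+b)%Z. rewrite plus_IZR. reflexivity. Qed.
Lemma isint_sub : forall x y, isint x -> isint y -> isint (x-y).
Proof. intros x y [a ->] [b ->]. exists (a-b)%Z. rewrite minus_IZR. reflexivity. Qed.
Lemma isint_cases : forall x, isint x -> x <= 0 \/ x = 1 \/ 2 <= x.
Proof.
  intros x [z ->]. destruct (Z.lt_ge_cases 0 z).
  - destruct (Z.eq_dec z 1). { subst. right; left. reflexivity. }
    right; right. apply IZR_le. lia.
  - left. apply IZR_le. lia.
Qed.

Lemma INR_pow2S : forall L, INR (2^(S L)) = 2 * INR (2^L).
Proof. intros. rewrite Nat.pow_succ_r', mult_INR. reflexivity. Qed.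

Lemma pow2_pos : forall L, 0 < INR (2^L).
Proof. intros. apply lt_0_INR. pose proof (Nat.pow_nonzero 2 L). lia. Qed.

Lemma Q : forall L m x, isint x -> INR (G (S L) m (x / INR (2^(S L)))) = clamp x (INR (2^(S L))).
Proof.
  induction L as [|L IH]; intros m x Hx.
  - change (INR (2^1)) with 2. unfold clamp.
    destruct (isint_cases x Hx) as [h|[h|h]].
    + rewrite G_zero by (apply le0_div; lra). destruct (Rle_dec x 0); [reflexivity|lra].
    + subst. unfold G. replace (2^1*m)%nat with (2*m)%nat by (simpl; lia).
      change (2^1)%nat with 2%nat. cbn [sumn]. rewrite Nat.add_0_r.
      unfold ile. rewrite a_even, a_odd. pose proof (a_bounds m).
      destruct (Rle_dec (a_tm m) (1/2)); repeat (destruct (Rle_dec _ _)); simpl; lra.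
    + rewrite G_full by (apply ge1_div; lra).
      destruct (Rle_dec x 0); [lra|]. destruct (Rle_dec 2 x); [reflexivity|lra].
  - set (D := INR (2^(S L))). set (K := INR (2^L)).
    assert (HD : D = 2*K) by (unfold D, K; apply INR_pow2S).
    assert (HK : 0 < K) by apply pow2_pos.
    rewrite INR_pow2S. fold D.
    destruct (Rle_dec x 0) as [h0|h0].
    { rewrite G_zero. - unfold clamp. destruct (Rle_dec x 0); [reflexivity|lra].
      - apply le0_div; lra. }
    destruct (Rle_dec (2*D) x) as [h1|h1].
    { rewrite G_full. - rewrite INR_pow2S. fold D. unfold clamp.
        destruct (Rle_dec x 0); [lra|]. destruct (Rle_dec (2*D) x); [reflexivity|lra].
      - apply ge1_div; lra. }
    assert (Hc : 0 <= x / (2*D) <= 1).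
    { split. - apply ge0_div; lra. - apply le1_div; lra. }
    pose proof (G_step (S L) m _ Hc) as St. apply (f_equal INR) in St.
    rewrite !plus_INR in St.
    assert (E1 : 2 * (x/(2*D)) - 1/2 = (x - K) / D) by (rewrite HD; field; lra).
    assert (E2 : 2 * (x/(2*D)) - 3/2 = (x - 3*K) / D) by (rewrite HD; field; lra).
    assert (E3 : 2 * (x/(2*D)) + 1/2 = (x + K) / D) by (rewrite HD; field; lra).
    assert (E4 : 1/2 = K / D) by (rewrite HD; field; lra).
    rewrite E1, E2, E3, E4 in St. unfold D in St.
    assert (IK : isint K) by apply isint_nat.
    rewrite !IH in St; try (apply isint_sub || apply isint_add); try assumption.
    2:{ replace (3*K) with (K+K+K) by ring. repeat apply isint_add; assumption. }
    fold D in St. unfold clamp in *.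
    destruct (Rle_dec x 0); [lra|]. destruct (Rle_dec (2*D) x); [lra|].
    repeat (destruct (Rle_dec _ _)); lra.
Qed.


Lemma abs_le_iff : forall x b, Rabs x <= b <-> -b <= x <= b.
Proof. intros. unfold Rabs. destruct (Rcase_abs x); split; intros; lra. Qed.

Lemma ilt_le1 : forall t i, (ilt t i <= 1)%nat.
Proof. intros. unfold ilt. destruct (Rlt_dec _ _); lia. Qed.

Lemma clamp_up : forall x D, 0 <= x -> clamp x D <= x.
Proof. intros. unfold clamp. repeat destruct (Rle_dec _ _); lra. Qed.
Lemma clamp_low : forall x D, x <= D -> x <= clamp x D.
Proof. intros. unfold clamp. repeat destruct (Rle_dec _ _); lra. Qed.

Lemma block : forall t L m, 0 <= t <= 1 ->
  Rabs (INR (sumn (ilt t) (2^(S L) * m) (2^(S L))) - t * INR (2^(S L))) <= 2.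
Proof.
  intros t L m Ht. set (D := INR (2^(S L))). assert (HD : 0 < D) by apply pow2_pos.
  set (y := t * D). destruct (archimed y) as [A1 A2].
  set (h := IZR (up y) - 1).
  assert (Hh : isint h) by (exists (up y - 1)%Z; unfold h; rewrite minus_IZR; reflexivity).
  assert (Hy0 : 0 <= y) by (unfold y; nra). assert (HyD : y <= D) by (unfold y; nra).
  apply abs_le_iff. split.
  - assert (Lo : (sumn (ile ((h-1)/D)) (2^(S L)*m) (2^(S L)) <= sumn (ilt t) (2^(S L)*m) (2^(S L)))%nat).
    { apply sumn_le. intros k _. unfold ile, ilt.
      assert ((h-1)/D < t).
      { apply (Rmult_lt_reg_r D); [lra|]. unfold Rdiv. rewrite Rmult_assoc, Rinv_l by lra. unfold h, y in *. lra. }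
      destruct (Rle_dec _ _); destruct (Rlt_dec _ _); lra || lia. }
    apply le_INR in Lo. pose proof (Q L m (h-1) ltac:(apply isint_sub; [assumption|exists 1%Z; reflexivity])) as QQ.
    unfold G in QQ. fold D in QQ. rewrite QQ in Lo.
    pose proof (clamp_low (h-1) D ltac:(unfold h; lra)). unfold h in *. fold y. lra.
  - assert (Up : (sumn (ilt t) (2^(S L)*m) (2^(S L)) <= sumn (ile ((h+1)/D)) (2^(S L)*m) (2^(S L)))%nat).
    { apply sumn_le. intros k _. unfold ile, ilt.
      assert (t <= (h+1)/D).
      { apply (Rmult_le_reg_r D); [lra|]. unfold Rdiv. rewrite Rmult_assoc, Rinv_l by lra. unfold h, y in *. lra. }
      destruct (Rle_dec _ _); destruct (Rlt_dec _ _); lra || lia. }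
    apply le_INR in Up. pose proof (Q L m (h+1) ltac:(apply isint_add; [assumption|exists 1%Z; reflexivity])) as QQ.
    unfold G in QQ. fold D in QQ. rewrite QQ in Up.
    pose proof (clamp_up (h+1) D ltac:(unfold h; lra)). unfold h in *. fold y. lra.
Qed.

Lemma blocks : forall t L m q, 0 <= t <= 1 ->
  Rabs (INR (sumn (ilt t) (2^(S L) * m) (q * 2^(S L))) - t * INR (q * 2^(S L))) <= 2 * INR q.
Proof.
  intros t L m q Ht. induction q.
  - simpl. rewrite Rmult_0_r, Rminus_0_r, Rabs_R0. lra.
  - replace (S q * 2^(S L))%nat with (q * 2^(S L) + 2^(S L))%nat by lia.
    rewrite sumn_split. replace (2^(S L) * m + q * 2^(S L))%nat with (2^(S L) * (m+q))%nat by lia.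
    pose proof (block t L (m+q) Ht). rewrite !plus_INR. rewrite S_INR.
    apply abs_le_iff in IHq. apply abs_le_iff in H. apply abs_le_iff. lra.
Qed.

Lemma trivial_bound : forall t j n, 0 <= t <= 1 ->
  Rabs (INR (sumn (ilt t) j n) - t * INR n) <= INR n.
Proof.
  intros t j n Ht. pose proof (sumn_bound (ilt t) j n (ilt_le1 t)) as B. apply le_INR in B.
  pose proof (pos_INR (sumn (ilt t) j n)). pose proof (pos_INR n).
  apply abs_le_iff. split; nra.
Qed.

Lemma window : forall t L j n, 0 <= t <= 1 ->
  Rabs (INR (sumn (ilt t) j n) - t * INR n) <= 2 * INR (2^(S L)) + 2 * INR n / INR (2^(S L)).
Proof.
  intros t L j n Ht. set (B := (2^(S L))%nat).
  assert (HB : (B > 0)%nat) by (unfold B; pose proof (Nat.pow_nonzero 2 (S L)); lia).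
  assert (HBr : 0 < INR B) by (apply lt_0_INR; lia).
  assert (Hq0 : 0 <= 2 * INR n / INR B) by (apply ge0_div; [lra|]; pose proof (pos_INR n); lra).
  set (j0 := (B * (j / B + 1))%nat).
  assert (Hj0 : (j < j0 <= j + B)%nat).
  { unfold j0. pose proof (Nat.div_mod_eq j B). pose proof (Nat.mod_upper_bound j B ltac:(lia)). nia. }
  set (p := (j0 - j)%nat).
  destruct (Nat.le_gt_cases n p) as [Hn|Hn].
  { pose proof (trivial_bound t j n Ht). assert (INR n <= INR B) by (apply le_INR; unfold p in Hn; lia). lra. }
  set (q := ((n - p) / B)%nat). set (s := ((n-p) mod B)%nat).
  assert (En : n = (p + (q * B + s))%nat).
  { unfold q, s. pose proof (Nat.div_mod_eq (n-p) B). lia. }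
  assert (Hs : (s < B)%nat) by (apply Nat.mod_upper_bound; lia).
  assert (Cs : sumn (ilt t) j n = (sumn (ilt t) j p + (sumn (ilt t) (B * (j / B + 1)) (q*B) + sumn (ilt t) (B * (j / B + 1) + q * B) s))%nat).
  { rewrite En at 1. rewrite !sumn_split.
    replace (j + p)%nat with (B * (j / B + 1))%nat by (unfold p, j0 in *; lia). reflexivity. }
  assert (Ens : INR n = INR p + (INR (q*B) + INR s)) by (rewrite En at 1; rewrite !plus_INR; reflexivity).
  rewrite Cs.
  pose proof (blocks t L (j / B + 1) q Ht) as E2. fold B in E2.
  pose proof (trivial_bound t j p Ht) as E1.
  pose proof (trivial_bound t (B * (j / B + 1) + q * B) s Ht) as E3.
  assert (Hp : INR p <= INR B) by (apply le_INR; unfold p; lia).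
  assert (Hs' : INR s <= INR B) by (apply le_INR; lia).
  assert (Hq : 2 * INR q <= 2 * INR n / INR B).
  { assert (INR q * INR B <= INR n) by (rewrite <- mult_INR; apply le_INR; nia).
    apply (Rmult_le_reg_r (INR B)); [lra|].
    replace (2 * INR n / INR B * INR B) with (2 * INR n) by (field; lra). lra. }
  rewrite !plus_INR. apply abs_le_iff in E1. apply abs_le_iff in E2. apply abs_le_iff in E3.
  apply abs_le_iff. rewrite Ens. split; nra.
Qed.


Lemma nat_gt : forall r, exists n : nat, r < INR n.
Proof.
  intros r. destruct (archimed r) as [A1 _].
  destruct (Z.le_gt_cases 0 (up r)) as [H|H].
  - exists (Z.to_nat (up r)). rewrite INR_IZR_INZ, Z2Nat.id by lia. exact A1.
  - exists 0%nat. simpl. apply IZR_lt in H. lra.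
Qed.

Theorem canon : canonical a_tm.
Proof.
  split; [|split].
  - apply repr.
  - intros i. pose proof (a_bounds i). lra.
  - intros t Ht eps Heps.
    destruct (nat_gt (4/eps)) as [M HM].
    set (B := INR (2^(S M))).
    assert (HBM : INR M < B) by (unfold B; apply lt_INR; pose proof (Nat.pow_gt_lin_r 2 (S M) ltac:(lia)); lia).
    assert (HB0 : 0 < B) by (unfold B; apply pow2_pos).
    assert (HBe : 4 < eps * B).
    { assert (4/eps < B) by lra. apply (Rmult_lt_compat_l eps) in H; [|lra].
      replace (eps * (4/eps)) with 4 in H by (field; lra). exact H. }
    destruct (nat_gt (4 * B / eps)) as [N HN].
    exists (S N). intros n j Hn.
    assert (Hn' : INR (S N) <= INR n) by (apply le_INR; exact Hn).
    rewrite S_INR in Hn'. pose proof (pos_INR N).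
    assert (Hnp : 0 < INR n) by lra.
    assert (HnB : 4 * B < eps * INR n).
    { assert (4 * B / eps < INR n) by lra. apply (Rmult_lt_compat_l eps) in H0; [|lra].
      replace (eps * (4 * B / eps)) with (4 * B) in H0 by (field; lra). exact H0. }
    pose proof (window t M j n Ht) as W. fold B in W.
    rewrite count_sumn.
    replace (INR (sumn (ilt t) j n) / INR n - t) with ((INR (sumn (ilt t) j n) - t * INR n) / INR n) by (field; lra).
    unfold Rdiv at 1. rewrite Rabs_mult, Rabs_inv, (Rabs_pos_eq (INR n)) by lra.
    apply (Rmult_lt_reg_r (INR n)); [lra|]. rewrite Rmult_assoc, Rinv_l, Rmult_1_r by lra.
    assert (K1 : 2 * INR n / B * (eps * B) = 2 * eps * INR n) by (field; lra).
    assert (2 * INR n / B * 4 < 2 * eps * INR n).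
    { rewrite <- K1. apply Rmult_lt_compat_l; [|lra].
      unfold Rdiv. apply Rmult_lt_0_compat; [lra|]. apply Rinv_0_lt_compat; lra. }
    lra.
Qed.

Theorem mainTheorem4 :
  canonical a_tm /\ represents_alpha a_tm u_tm /\ alpha_ergodic u_tm.
Proof.
  split; [exact canon|]. split; [exact repr|]. exists a_tm. split; [exact canon|exact repr].
Qed.
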